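(* Let $A$ be a $t\times T$ binary matrix of rank $t$ over $\mathbb F_2$, and let $v\in\mathbb F_2^T$ be a minimal nonzero vector of the row space of $A$ (i.e. no nonzero vector in the row space has support strictly contained in the support of $v$). Let $B$ be the $t\times|v|$ matrix obtained from $A$ by deleting all columns whose index is not in the support of $v$ (here $|v|$ is the size of the support), and let $A'$ be the $(t+1)\times2|v|$ matrix $$A'=\left[\begin{array}{c|c} B & B\\ 1\cdots1 & 0\cdots0\end{array}\right].$$ Then for every $f:\{0,1\}^n\to\{-1,1\}$, $\mathbb E_A(f)\le\sqrt{\mathbb E_{A'}(f)}$ (in particular $\mathbb E_{A'}(f)\ge0$).
   Context: $\{0,1\}^n$ is identified with $\mathbb F_2^n$. For a $t\times T$ binary matrix $A=(A_{ij})$, $\mathbb E_A(f)=\mathbb E_{y_1,\dots,y_t}\prod_{j=1}^T f\big(\sum_{i=1}^tA_{ij}y_i\big)$, with $y_1,\dots,y_t$ independent uniform in $\{0,1\}^n$. *)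

(* Defs.v *)
From HB Require Import structures.
From mathcomp Require Import all_boot all_order all_algebra.
Set Implicit Arguments. Unset Strict Implicit. Unset Printing Implicit Defensive.
Import Order.TTheory GRing.Theory Num.Theory.
Local Open Scope ring_scope.

Definition EA (R : numFieldType) (n t T : nat) (A : 'M['F_2]_(t, T))
  (f : 'rV['F_2]_n -> R) : R :=
  (#|{ffun 'I_t -> 'rV['F_2]_n}|%:R)^-1 *
  \sum_(y : {ffun 'I_t -> 'rV['F_2]_n})
     \prod_(j < T) f (\sum_(i < t) A i j *: y i).

Definition supp (T : nat) (v : 'rV['F_2]_T) : {set 'I_T} :=
  [set j | v 0 j != 0].

Definition minimal_in_rowspace (t T : nat) (A : 'M['F_2]_(t, T))
  (v : 'rV['F_2]_T) : Prop :=
  [/\ v != 0, (v <= A)%MS &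
      forall w : 'rV['F_2]_T, (w <= A)%MS -> w != 0 -> ~~ (supp w \proper supp v)].

(* B: columns of A indexed by the support of v (in increasing order) *)
Definition restrict_cols (t T : nat) (A : 'M['F_2]_(t, T)) (v : 'rV['F_2]_T)
  : 'M['F_2]_(t, #|supp v|) :=
  \matrix_(i < t, l < #|supp v|) A i (enum_val l).

Definition Aprime (t T : nat) (A : 'M['F_2]_(t, T)) (v : 'rV['F_2]_T)
  : 'M['F_2]_(t + 1, #|supp v| + #|supp v|) :=
  col_mx (row_mx (restrict_cols A v) (restrict_cols A v))
         (row_mx (const_mx 1) 0).

(* Main.v *)
Require Import Defs.
From HB Require Import structures.
From mathcomp Require Import all_boot all_order all_algebra.
From mathcomp Require Import ring lra.
Import Order.TTheory GRing.Theory Num.Theory.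
Set Implicit Arguments. Unset Strict Implicit. Unset Printing Implicit Defensive.
Local Open Scope ring_scope.

Lemma F2_cases (x : 'F_2) : x = 0 \/ x = 1.
Proof. case: x => m Hm. case: m Hm => [|[|m]] Hm.
- by left; apply/val_inj.
- by right; apply/val_inj.
- done.
Qed.

Lemma F2_addxx (x : 'F_2) : x + x = 0.
Proof. have [->|->] := F2_cases x; first by rewrite addr0.
by apply/val_inj. Qed.

Definition acol (n t T : nat) (A : 'M['F_2]_(t, T)) (j : 'I_T)
  (y : {ffun 'I_t -> 'rV['F_2]_n}) : 'rV['F_2]_n := \sum_(i < t) A i j *: y i.

Definition shift (n t : nat) (c : 'rV['F_2]_t) (w : 'rV['F_2]_n)
  (y : {ffun 'I_t -> 'rV['F_2]_n}) : {ffun 'I_t -> 'rV['F_2]_n} :=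
  [ffun i => y i + c 0 i *: w].

Lemma shiftK n t (c : 'rV['F_2]_t) (w : 'rV['F_2]_n) : involutive (shift c w).
Proof.
move=> y; apply/ffunP => i; rewrite !ffunE -addrA -scalerDl F2_addxx scale0r addr0 //.
Qed.

Lemma acol_shift n t T (A : 'M['F_2]_(t, T)) (c : 'rV['F_2]_t) (w : 'rV['F_2]_n) j y :
  acol A j (shift c w y) = acol A j y + (c *m A) 0 j *: w.
Proof.
rewrite /acol; under eq_bigr do rewrite ffunE scalerDr scalerA.
rewrite big_split /= -scaler_suml mxE; congr (_ + _ *: _).
by apply: eq_bigr => i _; rewrite mulrC.
Qed.

Lemma N_neq0 (R : numFieldType) n : (#|{: 'rV['F_2]_n}|%:R : R) != 0.
Proof. by rewrite pnatr_eq0 -lt0n; apply/card_gt0P; exists 0. Qed.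

Lemma avg_shift (R : numFieldType) n t (c : 'rV['F_2]_t)
   (G : {ffun 'I_t -> 'rV['F_2]_n} -> R) :
  \sum_y G y = (#|{: 'rV['F_2]_n}|%:R)^-1 * \sum_w \sum_y G (shift c w y).
Proof.
have E : forall w, \sum_y G (shift c w y) = \sum_y G y.
  by move=> w; symmetry; exact: (reindex_inj (inv_inj (shiftK c w))).
rewrite (eq_bigr (fun _ => \sum_y G y) (fun w _ => E w)).
rewrite sumr_const mulrnAr -mulrnAl -mulr_natr mulVf ?mul1r //.
exact: N_neq0.
Qed.


Definition gp (R : numFieldType) n t T (A : 'M['F_2]_(t, T)) (v : 'rV['F_2]_T)
  (f : 'rV['F_2]_n -> R) (y : {ffun 'I_t -> 'rV['F_2]_n}) : R :=
  \prod_(j < T | v 0 j == 0) f (acol A j y).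

Definition Qp (R : numFieldType) n t T (A : 'M['F_2]_(t, T)) (v : 'rV['F_2]_T)
  (f : 'rV['F_2]_n -> R) (y : {ffun 'I_t -> 'rV['F_2]_n}) (w : 'rV['F_2]_n) : R :=
  \prod_(l < #|supp v|) f (acol A (enum_val l) y + w).

Lemma v_supp1 T (v : 'rV['F_2]_T) (l : 'I_#|supp v|) : v 0 (enum_val l) = 1.
Proof.
have := enum_valP l; rewrite inE; case: (F2_cases (v 0 (enum_val l))) => -> //.
Qed.

Lemma prod_shift (R : numFieldType) n t T (A : 'M['F_2]_(t, T)) (v : 'rV['F_2]_T)
  (c : 'rV['F_2]_t) (f : 'rV['F_2]_n -> R) y w :
  v = c *m A ->
  \prod_(j < T) f (acol A j (shift c w y)) = gp A v f y * Qp A v f y w.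
Proof.
move=> vE; rewrite (bigID (fun j => v 0 j == 0)) /=; congr (_ * _).
  by apply: eq_bigr => j /eqP vj0; rewrite acol_shift -vE vj0 scale0r addr0.
rewrite (eq_bigl (fun j => j \in supp v)); last by move=> j; rewrite inE.
rewrite big_enum_val /Qp; apply: eq_bigr => l _.
by rewrite acol_shift -vE v_supp1 scale1r.
Qed.

Lemma EA_A_eq (R : numFieldType) n t T (A : 'M['F_2]_(t, T)) (v : 'rV['F_2]_T)
  (c : 'rV['F_2]_t) (f : 'rV['F_2]_n -> R) :
  v = c *m A ->
  EA A f = (#|{ffun 'I_t -> 'rV['F_2]_n}|%:R * #|{: 'rV['F_2]_n}|%:R)^-1 *
           \sum_y (gp A v f y * \sum_w Qp A v f y w).
Proof.
move=> vE; rewrite /EA (avg_shift c).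
under eq_bigr => w _ do under eq_bigr => y _ do rewrite (prod_shift _ _ _ vE).
rewrite exchange_big /=.
under [X in _ = _ * X]eq_bigr => y _ do rewrite mulr_sumr.
by rewrite invfM mulrA.
Qed.


Definition phi n t (p : {ffun 'I_t -> 'rV['F_2]_n} * 'rV['F_2]_n)
  : {ffun 'I_(t + 1) -> 'rV['F_2]_n} :=
  [ffun i => match split i with inl i' => p.1 i' | inr _ => p.2 end].

Definition psi n t (z : {ffun 'I_(t + 1) -> 'rV['F_2]_n})
  : {ffun 'I_t -> 'rV['F_2]_n} * 'rV['F_2]_n :=
  ([ffun i => z (lshift 1 i)], z (rshift t ord0)).

Lemma phi_l n t p i : @phi n t p (lshift 1 i) = p.1 i.
Proof. by rewrite ffunE (unsplitK (inl _ i)). Qed.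

Lemma phi_r n t p k : @phi n t p (rshift t k) = p.2.
Proof. by rewrite ffunE (unsplitK (inr _ k)). Qed.

Lemma phi_bij n t : bijective (@phi n t).
Proof.
exists (@psi n t).
  case=> y s; rewrite /psi phi_r; congr (_, _).
  by apply/ffunP => i; rewrite ffunE phi_l.
move=> z; apply/ffunP => i; rewrite /psi.
case: (splitP i) => [j Ej|k Ek].
  have -> : i = lshift 1 j by apply/val_inj.
  by rewrite phi_l ffunE.
have -> : i = rshift t k by apply/val_inj.
rewrite phi_r /=; congr (z _); apply/val_inj => /=.
by case: k {Ek} => [[|//] ?].
Qed.

Lemma sum_pair (R : numFieldType) (I J : finType) (G : I * J -> R) :
  \sum_p G p = \sum_i \sum_j G (i, j).
Proof. by rewrite pair_big; apply: eq_bigr => -[]. Qed.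

Lemma Ap_colL n t T (A : 'M['F_2]_(t, T)) (v : 'rV['F_2]_T) y s (l : 'I_#|supp v|) :
  \sum_(i < t + 1) Aprime A v i (lshift #|supp v| l) *: @phi n t (y, s) i
  = acol A (enum_val l) y + s.
Proof.
rewrite big_split_ord big_ord1 /Aprime col_mxEd row_mxEl mxE scale1r phi_r.
congr (_ + _); apply: eq_bigr => i _.
by rewrite col_mxEu row_mxEl mxE phi_l.
Qed.

Lemma Ap_colR n t T (A : 'M['F_2]_(t, T)) (v : 'rV['F_2]_T) y s (l : 'I_#|supp v|) :
  \sum_(i < t + 1) Aprime A v i (rshift #|supp v| l) *: @phi n t (y, s) i
  = acol A (enum_val l) y.
Proof.
have z0 : forall i j, (0 : 'M['F_2]_(1, #|supp v|)) i j = 0.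
  by move=> i j; rewrite /GRing.zero /= mxE.
rewrite big_split_ord big_ord1 /Aprime col_mxEd row_mxEr z0 scale0r.
rewrite -[RHS]addr0; congr (_ + _); apply: eq_bigr => i _.
by rewrite col_mxEu row_mxEr mxE phi_l.
Qed.

Lemma sum_phi (R : numFieldType) n t (G : {ffun 'I_(t + 1) -> 'rV['F_2]_n} -> R) :
  \sum_z G z = \sum_(y : {ffun 'I_t -> 'rV['F_2]_n}) \sum_(s : 'rV['F_2]_n) G (phi (y, s)).
Proof.
rewrite (reindex _ (onW_bij _ (@phi_bij n t))) /=.
by rewrite (sum_pair (fun p => G (phi p))).
Qed.

Lemma prodAp (R : numFieldType) n t T (A : 'M['F_2]_(t, T)) (v : 'rV['F_2]_T)
  (f : 'rV['F_2]_n -> R) y s :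
  \prod_(j < #|supp v| + #|supp v|) f (\sum_(i < t + 1) Aprime A v i j *: @phi n t (y, s) i)
  = Qp A v f y s * Qp A v f y 0.
Proof.
rewrite big_split_ord; congr (_ * _); apply: eq_bigr => l _.
  by rewrite Ap_colL.
by rewrite Ap_colR addr0.
Qed.

Lemma Qp_shift (R : numFieldType) n t T (A : 'M['F_2]_(t, T)) (v : 'rV['F_2]_T)
  (c : 'rV['F_2]_t) (f : 'rV['F_2]_n -> R) y w s :
  v = c *m A -> Qp A v f (shift c w y) s = Qp A v f y (w + s).
Proof.
move=> vE; apply: eq_bigr => l _.
by rewrite acol_shift -vE v_supp1 scale1r addrA.
Qed.

Lemma EA_Ap_eq (R : numFieldType) n t T (A : 'M['F_2]_(t, T)) (v : 'rV['F_2]_T)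
  (c : 'rV['F_2]_t) (f : 'rV['F_2]_n -> R) :
  v = c *m A ->
  EA (Aprime A v) f = (#|{ffun 'I_t -> 'rV['F_2]_n}|%:R * #|{: 'rV['F_2]_n}|%:R
                        * #|{: 'rV['F_2]_n}|%:R)^-1 *
           \sum_y (\sum_w Qp A v f y w) ^+ 2.
Proof.
move=> vE; rewrite /EA.
have -> : #|{ffun 'I_(t + 1) -> 'rV['F_2]_n}| =
          (#|{ffun 'I_t -> 'rV['F_2]_n}| * #|{: 'rV['F_2]_n}|)%N.
  by rewrite !card_ffun !card_ord addn1 expnSr.
rewrite sum_phi.
rewrite (eq_bigr (fun y => \sum_s Qp A v f y s * Qp A v f y 0)); last first.
  by move=> y _; apply: eq_bigr => s _; exact: prodAp.
rewrite (avg_shift c (fun y => \sum_s Qp A v f y s * Qp A v f y 0)).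
under eq_bigr => w _ do under eq_bigr => y _ do under eq_bigr => s _ do
  rewrite !(Qp_shift _ _ _ _ vE) addr0.
have E : forall w y, \sum_s Qp A v f y (w + s) * Qp A v f y w =
                     \sum_s Qp A v f y s * Qp A v f y w.
  by move=> w y; symmetry; exact: (reindex_inj (addrI w)).
under eq_bigr => w _ do under eq_bigr => y _ do rewrite E.
rewrite exchange_big /= natrM !invfM -!mulrA; congr (_ * (_ * _)).
congr (_ * _); apply: eq_bigr => y _.
by rewrite expr2 mulr_sumr; apply: eq_bigr => w _; rewrite mulr_suml.
Qed.


Lemma CS_fin (R : realFieldType) (I : finType) (F : I -> R) :
  (\sum_i F i) ^+ 2 <= #|I|%:R * \sum_i F i ^+ 2.
Proof.
set S := \sum_i F i; set Q := \sum_i F i ^+ 2; set M : R := #|I|%:R.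
have Hi : forall i, \sum_j (F i - F j) ^+ 2 = M * F i ^+ 2 - (F i * S) *+ 2 + Q.
  move=> i; under eq_bigr => j _ do rewrite sqrrB.
  rewrite big_split /= sumrB sumr_const sumrMnl -mulr_sumr /M mulr_natl //.
have H : 0 <= \sum_i \sum_j (F i - F j) ^+ 2 by apply: sumr_ge0 => i _; apply: sumr_ge0 => j _; apply: sqr_ge0.
rewrite (eq_bigr _ (fun i _ => Hi i)) in H.
rewrite big_split /= sumrB -mulr_sumr sumrMnl -big_distrl /= sumr_const -/Q -/S in H.
rewrite -subr_ge0. 
have -> : M * Q - S ^+ 2 = (M * Q - S * S *+ 2 + Q *+ #|I|) / 2%:R.
  by rewrite /M -mulr_natl; field.
apply: divr_ge0; [exact: H | exact: ler0n].
Qed.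

Theorem proposition7p6 (R : rcfType) (n t T : nat) (A : 'M['F_2]_(t, T))
  (v : 'rV['F_2]_T) :
  \rank A = t ->
  minimal_in_rowspace A v ->
  forall f : 'rV['F_2]_n -> R, (forall x, f x = 1 \/ f x = -1) ->
  0 <= EA (Aprime A v) f /\ EA A f <= Num.sqrt (EA (Aprime A v) f).
Proof.
move=> _ [_ /submxP [c vE] _] f f1.
have f2 : forall x, f x ^+ 2 = 1 by move=> x; case: (f1 x) => ->; rewrite ?expr1n ?sqrrN ?expr1n.
have g2 : forall y, gp A v f y ^+ 2 = 1.
  by move=> y; rewrite /gp -prodrXl; apply: big1 => j _; rewrite f2.
rewrite (EA_A_eq _ vE) (EA_Ap_eq _ vE).
set K : R := #|{ffun 'I_t -> 'rV['F_2]_n}|%:R.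
set N : R := #|{: 'rV['F_2]_n}|%:R.
have K0 : 0 < K by rewrite /K ltr0n; apply/card_gt0P; exists [ffun=> 0].
have N0 : 0 < N by rewrite /N ltr0n; apply/card_gt0P; exists 0.
set a := fun y => gp A v f y * \sum_w Qp A v f y w.
have E2 : \sum_y (\sum_w Qp A v f y w) ^+ 2 = \sum_y a y ^+ 2.
  by apply: eq_bigr => y _; rewrite /a exprMn g2 mul1r.
rewrite E2 -/(\sum_y a y) .
have P : 0 <= (K * N * N)^-1 * \sum_y a y ^+ 2.
  apply: mulr_ge0; first by rewrite invr_ge0; apply: mulr_ge0; [apply: mulr_ge0|]; apply: ltW.
  by apply: sumr_ge0 => y _; apply: sqr_ge0.
split=> //.
apply: (le_trans (ler_norm _)).
rewrite -sqrtr_sqr ler_sqrt //.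
have CS := CS_fin a.
rewrite exprMn.
apply: (le_trans (y := ((K * N)^-1) ^+ 2 * (K * \sum_y a y ^+ 2))).
  by apply: ler_wpM2l => //; apply: sqr_ge0.
rewrite le_eqVlt; apply/orP; left; apply/eqP.
field; apply/andP; split; apply: lt0r_neq0 => //.
Qed.
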